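(* Consider the convex vector optimization problem of minimizing $f(x)$ with respect to $\le_C$ subject to $h(x)\le 0$ (with $C\subseteq\mathbb{R}^q$ a nontrivial pointed convex cone with nonempty interior, $h:\mathbb{R}^n\to\mathbb{R}^m$ continuous and $\mathbb{R}^m_+$-convex, $f:\mathbb{R}^n\to\mathbb{R}^q$ continuous and $C$-convex), with upper image $\mathcal{P}=\operatorname{cl}(f(\mathcal{X})+C)$, where $\mathcal{X}=\{x\mid h(x)\le0\}$, and let $\mathcal{P}_\infty$ be the recession cone of $\mathcal{P}$. Let $\delta\ge 0$, let $\mathcal{Z}\subseteq\mathbb{R}^q$ be a finite $\delta$-inner approximation of $\mathcal{P}_\infty^+$, and let $\mathcal{Y}\subseteq\mathbb{R}^q$ be a finite set with $(\operatorname{cone}\mathcal{Z})^+=\operatorname{cone}\mathcal{Y}$. Then $\mathcal{Y}$ is a finite $\delta$-outer approximation of $\mathcal{P}_\infty$.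
   Context: Norms are Euclidean, $B(c,r)=\{y\mid\|y-c\|\le r\}$, and $d^H(A,B)=\max\{\sup_{a\in A}\inf_{b\in B}\|a-b\|,\sup_{b\in B}\inf_{a\in A}\|a-b\|\}$ is the Hausdorff distance. For $A\subseteq\mathbb{R}^q$: $A^+=\{w\mid w^\mathsf{T} a\ge0\ \forall a\in A\}$ is the dual cone, $\operatorname{cone}A$ is the set of all finite nonnegative combinations of points of $A$ (with $\operatorname{cone}\emptyset=\{0\}$), and the recession cone is $A_\infty=\{d\mid a+\lambda d\in A\ \forall a\in A,\lambda\ge0\}$. For a convex cone $K\subseteq\mathbb{R}^q$, a finite set $\mathcal{Y}$ is a finite $\delta$-outer approximation of $K$ if $K\subseteq\operatorname{cone}\mathcal{Y}$ and $d^H(K\cap B(0,1),\operatorname{cone}\mathcal{Y}\cap B(0,1))\le\delta$; a finite set $\mathcal{Z}$ is a finite $\delta$-inner approximation of $K$ if $\operatorname{cone}\mathcal{Z}\subseteq K$ and $d^H(K\cap B(0,1),\operatorname{cone}\mathcal{Z}\cap B(0,1))\le\delta$. *)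

(* Defs.v *)
From HB Require Import structures.
From mathcomp Require Import all_boot all_order all_algebra.
From mathcomp Require Import all_classical all_reals all_analysis.
Set Implicit Arguments. Unset Strict Implicit. Unset Printing Implicit Defensive.
Import Order.TTheory GRing.Theory Num.Theory.
Import numFieldNormedType.Exports.
Local Open Scope classical_set_scope.
Local Open Scope ring_scope.

Section Defs.
Variable R : realType.

Definition edot {q : nat} (u v : 'rV[R]_q) : R := \sum_(i < q) u 0 i * v 0 i.
Definition enorm {q : nat} (u : 'rV[R]_q) : R := Num.sqrt (edot u u).

Definition eball {q : nat} (c : 'rV[R]_q) (r : R) : set 'rV[R]_q :=
  [set y | enorm (y - c) <= r].

Definition hausdorff {q : nat} (A B : set 'rV[R]_q) : \bar R :=
  maxe (ereal_sup [set ereal_inf [set (enorm (a - b))%:E | b in B] | a in A])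
       (ereal_sup [set ereal_inf [set (enorm (a - b))%:E | a in A] | b in B]).

Definition dual_cone {q : nat} (A : set 'rV[R]_q) : set 'rV[R]_q :=
  [set w | forall a, A a -> 0 <= edot w a].

(* conic hull: all finite nonnegative combinations (cone set0 = [set 0]) *)
Definition cone {q : nat} (A : set 'rV[R]_q) : set 'rV[R]_q :=
  [set x | exists (k : nat) (a : 'I_k -> 'rV[R]_q) (l : 'I_k -> R),
      (forall i, A (a i)) /\ (forall i, 0 <= l i) /\ x = \sum_(i < k) l i *: a i].

Definition recession_cone {q : nat} (A : set 'rV[R]_q) : set 'rV[R]_q :=
  [set d | forall a, A a -> forall lam : R, 0 <= lam -> A (a + lam *: d)].

Definition is_convex_cone {q : nat} (C : set 'rV[R]_q) : Prop :=
  C 0 /\ (forall x y, C x -> C y -> C (x + y)) /\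
  (forall (lam : R) x, 0 <= lam -> C x -> C (lam *: x)).

Definition is_pointed {q : nat} (C : set 'rV[R]_q) : Prop :=
  forall x, C x -> C (- x) -> x = 0.

Definition cone_convex {n q : nat} (C : set 'rV[R]_q) (f : 'rV[R]_n -> 'rV[R]_q) : Prop :=
  forall x y (t : R), 0 <= t <= 1 ->
    C (t *: f x + (1 - t) *: f y - f (t *: x + (1 - t) *: y)).

Definition orthant (m : nat) : set 'rV[R]_m := [set y | forall i, 0 <= y 0 i].

Definition outer_approx {q : nat} (delta : R) (K Y : set 'rV[R]_q) : Prop :=
  finite_set Y /\ K `<=` cone Y /\
  (hausdorff (K `&` eball 0 1) (cone Y `&` eball 0 1) <= delta%:E)%E.

Definition inner_approx {q : nat} (delta : R) (K Z : set 'rV[R]_q) : Prop :=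
  finite_set Z /\ cone Z `<=` K /\
  (hausdorff (K `&` eball 0 1) (cone Z `&` eball 0 1) <= delta%:E)%E.

Definition feasible {n m : nat} (h : 'rV[R]_n -> 'rV[R]_m) : set 'rV[R]_n :=
  [set x | forall i, h x 0 i <= 0].

Definition upper_image {n m q : nat} (C : set 'rV[R]_q)
  (f : 'rV[R]_n -> 'rV[R]_q) (h : 'rV[R]_n -> 'rV[R]_m) : set 'rV[R]_q :=
  closure [set y + c | y in f @` feasible h & c in C].

End Defs.

(* Main.v *)
Require Import Defs.
From HB Require Import structures.
From mathcomp Require Import all_boot all_order all_algebra.
From mathcomp Require Import all_classical all_reals all_analysis.
From mathcomp Require Import ring lra.
Import Order.TTheory GRing.Theory Num.Theory.
Import numFieldNormedType.Exports.
Local Open Scope classical_set_scope.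
Local Open Scope ring_scope.

Section Edot.
Variables (R : realType) (q : nat).
Implicit Types (u v w : 'rV[R]_q).

Lemma edotC u v : edot u v = edot v u.
Proof. by apply: eq_bigr => i _; rewrite mulrC. Qed.

Lemma edotDl u v w : edot (u + v) w = edot u w + edot v w.
Proof. by rewrite /edot -big_split; apply: eq_bigr => i _; rewrite !mxE mulrDl. Qed.

Lemma edotZl (a : R) u w : edot (a *: u) w = a * edot u w.
Proof. by rewrite /edot mulr_sumr; apply: eq_bigr => i _; rewrite !mxE mulrA. Qed.

Lemma edotNl u w : edot (- u) w = - edot u w.
Proof. by rewrite -scaleN1r edotZl mulN1r. Qed.

Lemma edotBl u v w : edot (u - v) w = edot u w - edot v w.
Proof. by rewrite edotDl edotNl. Qed.

Lemma edotDr u v w : edot w (u + v) = edot w u + edot w v.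
Proof. by rewrite edotC edotDl !(edotC w). Qed.
Lemma edotZr (a : R) u w : edot w (a *: u) = a * edot w u.
Proof. by rewrite edotC edotZl edotC. Qed.
Lemma edotNr u w : edot w (- u) = - edot w u.
Proof. by rewrite edotC edotNl edotC. Qed.
Lemma edotBr u v w : edot w (u - v) = edot w u - edot w v.
Proof. by rewrite edotDr edotNr. Qed.
Lemma edot0l w : edot 0 w = 0.
Proof. by rewrite /edot big1 // => i _; rewrite mxE mul0r. Qed.

Lemma edot_ge0 u : 0 <= edot u u.
Proof. by apply: sumr_ge0 => i _; rewrite -expr2 sqr_ge0. Qed.

Lemma edot_eq0 u : edot u u = 0 -> u = 0.
Proof.
move=> H; apply/rowP => i; rewrite mxE.
have := @psumr_eq0P R _ xpredT (fun i => u 0 i * u 0 i)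
  (fun i _ => ltac:(by rewrite /= -expr2 sqr_ge0)) H i isT.
by move/eqP; rewrite mulf_eq0 orbb => /eqP.
Qed.

Lemma coord_le_edot u i : (u 0 i) ^+ 2 <= edot u u.
Proof.
rewrite /edot (bigD1 i) //= -expr2 lerDl.
by apply: sumr_ge0 => j _; rewrite -expr2 sqr_ge0.
Qed.

Lemma enorm_ge0 u : 0 <= enorm u.
Proof. exact: sqrtr_ge0. Qed.

Lemma enorm_sqr u : enorm u ^+ 2 = edot u u.
Proof. by rewrite sqr_sqrtr // edot_ge0. Qed.

Lemma enorm_le1 u : (enorm u <= 1) = (edot u u <= 1).
Proof. by rewrite /enorm -{1}sqrtr1 ler_sqrt. Qed.

Lemma edot_le_enorm v b : edot b b <= 1 -> edot v b <= enorm v.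
Proof.
move=> hb.
have [v0|vn0] := eqVneq v 0; first by rewrite v0 edot0l enorm_ge0.
have vv0 : 0 < edot v v.
  rewrite lt_def edot_ge0 andbT; apply/eqP => /edot_eq0; exact/eqP.
set n := enorm v.
have n0 : 0 < n by rewrite /n /enorm sqrtr_gt0.
have hn : n ^+ 2 = edot v v by exact: enorm_sqr.
have := edot_ge0 (v - n *: b).
rewrite !edotBl !edotBr !edotZl !edotZr (edotC b v) -hn.
move=> H; nra.
Qed.

Lemma expand_sub u v (t : R) :
  edot (u - t *: v) (u - t *: v) = edot u u - 2 * t * edot u v + t ^+ 2 * edot v v.
Proof. rewrite !edotBl !edotBr !edotZl !edotZr (edotC v u); ring. Qed.
Lemma expand_add u v (t : R) :
  edot (u + t *: v) (u + t *: v) = edot u u + 2 * t * edot u v + t ^+ 2 * edot v v.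
Proof. rewrite !edotDl !edotDr !edotZl !edotZr (edotC v u); ring. Qed.

Lemma enormN u : enorm (- u) = enorm u.
Proof. by rewrite /enorm edotNl edotNr opprK. Qed.
Lemma enorm0 : enorm (0 : 'rV[R]_q) = 0.
Proof. by rewrite /enorm edot0l sqrtr0. Qed.

End Edot.
Arguments enormN {R q}. Arguments enorm0 {R q}.
Arguments expand_sub {R q}. Arguments expand_add {R q}.
Arguments edotC {R q}. Arguments edotDl {R q}. Arguments edotZl {R q}.
Arguments edotNl {R q}. Arguments edotBl {R q}. Arguments edotDr {R q}.
Arguments edotZr {R q}. Arguments edotNr {R q}. Arguments edotBr {R q}.
Arguments edot0l {R q}. Arguments edot_ge0 {R q}. Arguments edot_eq0 {R q}.
Arguments coord_le_edot {R q}. Arguments enorm_ge0 {R q}. Arguments enorm_sqr {R q}.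
Arguments enorm_le1 {R q}. Arguments edot_le_enorm {R q}.


Section Proj.
Variables (R : realType) (q : nat).

Lemma small_param {a b : R} : 0 <= b ->
  (forall t, 0 < t -> t <= 1 -> 0 <= t * a + t ^+ 2 * b) -> 0 <= a.
Proof.
move=> b0 H; rewrite leNgt; apply/negP => a0.
have c0 : 0 < b - a by lra.
pose t := - a / (b - a).
have tc : t * (b - a) = - a by rewrite /t mulfVK // gt_eqF.
have t0 : 0 < t by rewrite /t divr_gt0 // oppr_gt0.
have t1 : t <= 1 by rewrite /t ler_pdivrMr // mul1r; lra.
have := H t t0 t1.
have e : t * a + t ^+ 2 * b = t ^+ 2 * a.
  have := congr1 (fun x => t * x) tc => /= e; rewrite expr2; nra.
rewrite e; have : 0 < t ^+ 2 by rewrite exprn_gt0.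
nra.
Qed.

Lemma g_continuous (y : 'rV[R]_q) :
  continuous (fun a : 'rV[R]_q => edot (y - a) (y - a)).
Proof.
have -> : (fun a : 'rV[R]_q => edot (y - a) (y - a)) =
   \sum_(i < q) (fun a : 'rV[R]_q => (y 0 i - a 0 i) * (y 0 i - a 0 i)).
  rewrite fct_sumE; apply: funext => a; apply: eq_bigr => i _; by rewrite !mxE.
elim/big_ind: _.
- exact: cst_continuous.
- by move=> f g cf cg x; exact: continuousD (cf x) (cg x).
- move=> i _ x.
  have hc : {for x, continuous (fun a : 'rV[R]_q => y 0 i - a 0 i)}.
    apply: (@continuousB _ _ _ (fun=> y 0 i) (fun a : 'rV[R]_q => a 0 i)).
      exact: cst_continuous.
    exact: coord_continuous.
  have := continuousM hc hc. exact.
Qed.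

Lemma proj_cone (K : set 'rV[R]_q) (y : 'rV[R]_q) : closed K -> K 0 ->
  (forall u v, K u -> K v -> K (u + v)) ->
  (forall (l : R) u, 0 <= l -> K u -> K (l *: u)) ->
  exists p, K p /\ (forall k, K k -> edot (y - p) k <= 0) /\ edot (y - p) p = 0.
Proof.
move=> Kcl K0 KD KZ.
pose g a := edot (y - a) (y - a).
have gc : continuous g by exact: g_continuous.
pose A := K `&` [set a | g a <= g 0].
have Acl : closed A.
  apply: closedI => //; apply: (preimage_closed (f := g) (D := [set x | x <= g 0])).
    by move=> x _; exact: gc.
  exact: closed_le.
have Abd : bounded_set A.
  exists (2 + 2 * g 0); split; first by rewrite realE; apply/orP; left; 
    rewrite addr_ge0 // mulr_ge0 // edot_ge0.
  move=> M hM a [Ka ga].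

  rewrite /= [leLHS]/Num.norm /= mx_normrE; apply/bigmax_leP; split.
    apply: le_trans (ltW hM); rewrite addr_ge0 // mulr_ge0 // edot_ge0.
    by [].
  move=> [i j] _ /=; rewrite (ord1 i).
  have h1 := coord_le_edot (y - a) j; rewrite !mxE in h1.
  have h2 := coord_le_edot y j.
  have e0 : g 0 = edot y y by rewrite /g subr0.
  rewrite -/(g a) in h1; rewrite -e0 in h2.
  move: ga => /= ga.
  set c := y 0 j in h1 h2 *; set x := a 0 j in h1 *.
  have S0 : 0 <= g 0 by rewrite e0 edot_ge0.
  have k1 : 2 * (c - x) <= 1 + (c - x) ^+ 2 by have := sqr_ge0 (c - x - 1); nra.
  have k2 : 2 * (x - c) <= 1 + (c - x) ^+ 2 by have := sqr_ge0 (c - x + 1); nra.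
  have k3 : 2 * c <= 1 + c ^+ 2 by have := sqr_ge0 (c - 1); nra.
  have k4 : - 2 * c <= 1 + c ^+ 2 by have := sqr_ge0 (c + 1); nra.
  rewrite ler_norml; apply/andP; split; lra.
have A0 : A !=set0 by exists 0; split => //; rewrite /= lexx.
have [p pA pmin] := EVT_min_rV A0 (bounded_closed_compact Abd Acl)
  (@continuous_subspaceT _ _ A g gc).
move: pA; rewrite inE => -[Kp gp].
have gmin : forall k, K k -> g p <= g k.
  move=> k Kk; have [gk|gk] := leP (g k) (g 0).
    by apply: pmin; rewrite inE.
  by apply: le_trans (ltW gk).
set r := y - p.
have rk : forall k, K k -> edot r k <= 0.
  move=> k Kk.
  have H : forall t, 0 < t -> t <= 1 -> 0 <= t * (- (2 * edot r k)) + t ^+ 2 * edot k k.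
    move=> t t0 t1; have := gmin _ (KD _ _ Kp (KZ _ _ (ltW t0) Kk)).
    rewrite /g (_ : y - (p + t *: k) = r - t *: k); last by rewrite /r opprD addrA.
    rewrite -/r expand_sub; nra.
  have := small_param (edot_ge0 k) H; lra.
exists p; split => //; split => //.
apply/eqP; rewrite eq_le rk //=.
have H : forall t, 0 < t -> t <= 1 -> 0 <= t * (2 * edot r p) + t ^+ 2 * edot p p.
  move=> t t0 t1; have t2 : 0 <= 1 - t by lra.
  have := gmin _ (KZ _ _ t2 Kp).
  rewrite /g (_ : y - (1 - t) *: p = r + t *: p); last first.
    by rewrite /r scalerBl scale1r opprB addrA addrAC.
  rewrite -/r expand_add; nra.
have := small_param (edot_ge0 p) H; lra.
Qed.

End Proj.


Lemma recession_closed (R : realType) q (P : set 'rV[R]_q) :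
  closed P -> closed (recession_cone P).
Proof.
move=> Pcl.
have -> : recession_cone P = \bigcap_(i in [set i : 'rV[R]_q * R | P i.1 /\ 0 <= i.2])
    ((fun d => i.1 + i.2 *: d) @^-1` P).
  apply/seteqP; split => d /=.
    by move=> Hd [a lam] /= [Pa l0]; exact: Hd.
  by move=> Hd a Pa lam l0; exact: (Hd (a, lam)).
apply: closed_bigI => -[a lam] _; apply: preimage_closed => // x _.
apply: (@continuousD _ _ _ (fun=> a) (fun d => lam *: d)).
  exact: cst_continuous.
apply: (@continuousZ _ _ _ (fun=> lam) id); first exact: cst_continuous.
exact: cvg_id.
Qed.

Theorem proposition4p4 (R : realType) (n m q : nat)
  (C : set 'rV[R]_q) (f : 'rV[R]_n -> 'rV[R]_q) (h : 'rV[R]_n -> 'rV[R]_m)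
  (delta : R) (Z Y : set 'rV[R]_q) :
  is_convex_cone C -> is_pointed C -> C <> [set 0] -> C <> setT ->
  interior C !=set0 ->
  continuous h -> cone_convex (@orthant R m) h ->
  continuous f -> cone_convex C f ->
  0 <= delta ->
  inner_approx delta (dual_cone (recession_cone (upper_image C f h))) Z ->
  finite_set Y -> dual_cone (cone Z) = cone Y ->
  outer_approx delta (recession_cone (upper_image C f h)) Y.
Proof.
move=> _ _ _ _ _ _ _ _ _ d0 [_ [cZK hZ]] finY hY.
set P := upper_image C f h.
set K := recession_cone P.
have K0 : K 0 by move=> a Pa lam _; rewrite scaler0 addr0.
have KD : forall u v, K u -> K v -> K (u + v).
  move=> u v Ku Kv a Pa lam l0; rewrite scalerDr addrA; apply: Kv => //; exact: Ku.
have KZ : forall (l : R) u, 0 <= l -> K u -> K (l *: u).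
  move=> l u l0 Ku a Pa lam lam0; rewrite scalerA; apply: Ku => //; exact: mulr_ge0.
have Kcl : closed K by apply: recession_closed; exact: closed_closure.
have KY : K `<=` cone Y.
  rewrite -hY => d Kd z Zz; rewrite edotC; exact: cZK _ Zz _ Kd.
split => //; split => //.
rewrite /hausdorff ge_max; apply/andP; split.
  apply: ge_ereal_sup => _ [a [Ka Ba] <-].
  have : [set (enorm (a - b))%:E | b in cone Y `&` eball 0 1] (enorm (a - a))%:E.
    by exists a => //; split => //; exact: KY.
  move=> /ereal_inf_lbound H; apply: le_trans H _.
  by rewrite subrr enorm0 lee_fin.
apply: ge_ereal_sup => _ [b [Yb Bb] <-].
rewrite -hY in Yb.
have hbb : edot b b <= 1 by rewrite -enorm_le1; move: Bb; rewrite /eball /= subr0.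
have [p [Kp [rk rp]]] := @proj_cone R q K b Kcl K0 KD KZ.
have [r rE] : exists r, b - p = r by eexists.
rewrite rE in rk rp.
have bE : b = p + r by rewrite -rE addrC subrK.
have decomp : edot b b = edot p p + edot r r.
  rewrite bE edotDl !edotDr (edotC p r) rp; ring.
have nrd : enorm r <= delta.
  have [r0|rn0] := eqVneq r 0; first by rewrite r0 enorm0.
  have rr0 : 0 < edot r r.
    rewrite lt_def edot_ge0 andbT; apply/eqP => /edot_eq0; exact/eqP.
  set nr := enorm r.
  have nr0 : 0 < nr by rewrite /nr /enorm sqrtr_gt0.
  have hn : nr ^+ 2 = edot r r by exact: enorm_sqr.
  set a := nr^-1.
  have a0 : 0 < a by rewrite invr_gt0.
  have an : a * nr = 1 by rewrite mulVf // gt_eqF.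
  set u := (- a) *: r.
  have uK : dual_cone K u.
    move=> k Kk; rewrite /u edotZl; have := rk _ Kk; nra.
  have uu : edot u u <= 1.
    rewrite /u edotZl edotZr -hn; nra.
  have uB : eball 0 1 u by rewrite /eball /= subr0 enorm_le1.
  move: hZ; rewrite /hausdorff ge_max => /andP[h1 _].
  have : [set ereal_inf [set (enorm (a0 - b0))%:E | b0 in cone Z `&` eball 0 1]
           | a0 in dual_cone K `&` eball 0 1]
         (ereal_inf [set (enorm (u - b0))%:E | b0 in cone Z `&` eball 0 1]).
    by exists u.
  move=> /ereal_sup_ubound H2.
  have h3 := le_trans H2 h1.
  apply/ler_addgt0Pr => e e0.
  have : (ereal_inf [set (enorm (u - b0))%:E | b0 in cone Z `&` eball 0 1] <
           (delta + e)%:E)%E.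
    by apply: le_lt_trans h3 _; rewrite lte_fin ltrDl.
  move=> /ereal_inf_lt [_ [z [Zz _] <-]]; rewrite lte_fin => hz.
  have zb : 0 <= edot z b by rewrite edotC; exact: Yb.
  have ub : edot u b = - nr.
    rewrite /u edotZl bE edotDr rp add0r -hn; nra.
  have hzu := edot_le_enorm (z - u) b hbb.
  have : enorm (z - u) = enorm (u - z) by rewrite -opprB enormN.
  move: hzu; rewrite edotBl => hzu ezu.
  apply: ltW; lra.
have : [set (enorm (a - b))%:E | a in K `&` eball 0 1] (enorm (p - b))%:E.
  exists p => //; split => //; rewrite /eball /= subr0 enorm_le1.
  have := edot_ge0 r; lra.
move=> /ereal_inf_lbound H; apply: le_trans H _.
by rewrite -opprB rE enormN lee_fin.
Qed.
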